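(* Let $f:X\to X$ be a measurable map, $Y\subset X$ measurable, $\tau:Y\to\mathbb Z^+$ integrable with respect to a probability measure $\mu_Y$ on $Y$ that is invariant under $F:Y\to Y$, $F(y)=f^{\tau(y)}y$. Let $\bar\tau=\int_Y\tau\,d\mu_Y$, $\mu^\tau=(\mu_Y\times\text{counting})/\bar\tau$ on $Y^\tau=\{(y,\ell)\in Y\times\mathbb Z:0\le\ell\le\tau(y)-1\}$, and $\mu_X=\pi_*\mu^\tau$ where $\pi(y,\ell)=f^\ell y$. Let $h:X\to(0,\infty)$ be measurable and $H(y)=\sum_{\ell=0}^{\tau(y)-1}h(f^\ell y)$. Then \[ \mu_Y(H>t)\le\mu_Y(\tau>n)+\bar\tau\,\mu_X(h>t/n)\quad\text{for all }n\ge1,\ t>1. \] *)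

(* Defs.v *)
From HB Require Import structures.
From mathcomp Require Import all_boot all_order all_algebra.
From mathcomp Require Import all_classical all_reals all_analysis.
Set Implicit Arguments. Unset Strict Implicit. Unset Printing Implicit Defensive.
Import Order.TTheory GRing.Theory Num.Theory.
Import numFieldNormedType.Exports.
Local Open Scope classical_set_scope.
Local Open Scope ring_scope.

Section Tower.
Context {d : measure_display} {X : measurableType d} {R : realType}.

Definition first_return (f : X -> X) (tau : X -> nat) (y : X) : X :=
  iter (tau y) f y.

Definition tau_bar (muY : probability X R) (Y : set X) (tau : X -> nat) : \bar R :=
  (\int[muY]_(y in Y) ((tau y)%:R)%:E)%E.

Definition induced_sum (f : X -> X) (tau : X -> nat) (h : X -> R) (y : X) : R :=
  \sum_(0 <= l < tau y) h (iter l f y).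

(* mu_X = pi_* mu^tau, with mu^tau = (mu_Y x counting)/tau_bar on the tower
   Y^tau = {(y,l) : y in Y, 0 <= l <= tau y - 1} and pi(y,l) = f^l y. *)
Definition tower_pushforward (muY : probability X R) (Y : set X) (f : X -> X)
  (tau : X -> nat) (A : set X) : \bar R :=
  ((\sum_(0 <= l <oo) muY [set y | Y y /\ (l < tau y)%N /\ A (iter l f y)])
     * ((fine (tau_bar muY Y tau))^-1)%:E)%E.

End Tower.

(* Main.v *)
Require Import Defs.
From HB Require Import structures.
From mathcomp Require Import all_boot all_order all_algebra.
From mathcomp Require Import all_classical all_reals all_analysis.
From mathcomp Require Import measurable_realfun.
Import Order.TTheory GRing.Theory Num.Theory.
Import numFieldNormedType.Exports.
Local Open Scope classical_set_scope.
Local Open Scope ring_scope.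

Theorem propositionA1 (d : measure_display) (X : measurableType d) (R : realType)
  (f : X -> X) (Y : set X) (tau : X -> nat) (muY : probability X R) (h : X -> R) :
  measurable_fun setT f ->
  measurable Y ->
  muY Y = 1%E ->
  (forall y, Y y -> (0 < tau y)%N) ->
  muY.-integrable Y (fun y => ((tau y)%:R)%:E) ->
  (forall y, Y y -> Y (first_return f tau y)) ->
  (forall A, measurable A -> A `<=` Y ->
     muY (Y `&` (first_return f tau) @^-1` A) = muY A) ->
  measurable_fun setT h ->
  (forall x, 0 < h x) ->
  forall (n : nat) (t : R), (1 <= n)%N -> 1 < t ->
    (muY [set y | Y y /\ (t < induced_sum f tau h y)%R]
     <= muY [set y | Y y /\ (n < tau y)%N]
        + tau_bar muY Y tau
          * tower_pushforward muY Y f tau [set x | (t / n%:R < h x)%R])%E.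
Proof.
move=> mf mY muY1 tau0 itau _ _ mh hpos n t n1 t1.
have /integrableP[mtauE tauoo] := itau.
have mtau : measurable_fun Y (fun y => (tau y)%:R : R).
  by apply/measurable_EFinP.
have mit : forall l, measurable_fun setT (iter l f).
  elim=> [|l IH]; first exact: measurable_id.
  have -> : iter l.+1 f = f \o iter l f by apply/funext => x; rewrite iterS.
  exact: measurableT_comp.
have mlt : forall g : X -> R, measurable_fun setT g -> forall c,
    measurable [set y | c < g y].
  move=> g mg c.
  have -> : [set y | c < g y] = setT `&` g @^-1` `]c, +oo[.
    by rewrite setTI; apply/seteqP; split => y /=; rewrite in_itv /= andbT.
  exact: mg (measurable_itv _).
have mT : forall k, measurable [set y | Y y /\ tau y = k].
  move=> k.
  have -> : [set y | Y y /\ tau y = k] =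
            Y `&` (fun y => (tau y)%:R : R) @^-1` [set (k%:R : R)].
    apply/seteqP; split => y /= [Yy H]; split => //.
      by rewrite H.
    by apply/eqP; rewrite -(eqr_nat R); apply/eqP.
  exact: mtau.
have mQ : forall Q : nat -> set X, (forall k, measurable (Q k)) ->
    measurable [set y | Y y /\ Q (tau y) y].
  move=> Q mQk.
  have -> : [set y | Y y /\ Q (tau y) y] =
            \bigcup_k ([set y | Y y /\ tau y = k] `&` Q k).
    apply/seteqP; split => y /=.
      by move=> [Yy Qy]; exists (tau y) => //.
    by move=> [k _ [[Yy <-] Qy]].
  by apply: bigcupT_measurable => k; apply: measurableI.
have mcst : forall b : bool, measurable [set _ : X | b].
  case.
    have -> : [set _ : X | true] = setT by apply/seteqP; split.
    exact: measurableT.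
  have -> : [set _ : X | false] = set0 by apply/seteqP; split.
  exact: measurable0.
pose B l := [set y | Y y /\ (l < tau y)%N /\ [set x | (t / n%:R < h x)%R] (iter l f y)].
have mB : forall l, measurable (B l).
  move=> l.
  apply: (mQ (fun k => [set y | (l < k)%N /\ (t / n%:R < h (iter l f y))%R])) => k.
  have -> : [set y | (l < k)%N /\ (t / n%:R < h (iter l f y))%R] =
     [set _ | (l < k)%N] `&` [set y | t / n%:R < (h \o iter l f) y] by [].
  apply: measurableI; first exact: mcst.
  by apply: mlt; apply: measurableT_comp.
pose A := [set y | Y y /\ (n < tau y)%N].
have mA : measurable A by apply: (mQ (fun k => [set _ | (n < k)%N])).
pose S := [set y | Y y /\ (t < induced_sum f tau h y)%R].
have mS : measurable S.
  apply: (mQ (fun k => [set y | t < \sum_(0 <= l < k) h (iter l f y)])) => k.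
  apply: mlt; apply: measurable_sum => l.
  exact: measurableT_comp.
have sub : S `<=` A `|` \bigcup_l B l.
  move=> y [Yy Hy].
  case: (ltnP n (tau y)) => [ntau|taun]; [left | right]; first by [].
  case: (pselect (exists l, (l < tau y)%N /\ t / n%:R < h (iter l f y))) =>
    [[l [lt hl]]|nex]; first by exists l.
  exfalso.
  have : induced_sum f tau h y <= t.
    rewrite /induced_sum.
    apply: (@le_trans _ _ (\sum_(0 <= l < tau y) (t / n%:R))).
      apply: ler_sum_nat => l /andP[_ lt].
      rewrite leNgt; apply/negP => hl; by apply: nex; exists l; split.
    have n0 : (n%:R : R) != 0 by rewrite pnatr_eq0 -lt0n.
    rewrite sumr_const_nat subn0 -[t / n%:R *+ _]mulr_natr.
    apply: (@le_trans _ _ (t / n%:R * n%:R)); last by rewrite divfK.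
    have t0 : 0 < t by exact: lt_trans ltr01 t1.
    by rewrite ler_pM2l ?ler_nat // divr_gt0 // ltr0n.
  by rewrite leNgt Hy.
have H1 : (muY S <= muY A + muY (\bigcup_l B l))%E.
  apply: le_trans (measureU2 _ mA (bigcupT_measurable _ mB)).
  apply: le_measure => //; rewrite inE //.
  by apply: measurableU => //; exact: bigcupT_measurable.
have H2 : (muY (\bigcup_l B l) <= \sum_(0 <= l <oo) muY (B l))%E.
  by apply: measure_sigma_subadditive => //; exact: bigcupT_measurable.
have tbge1 : (1 <= tau_bar muY Y tau)%E.
  rewrite /tau_bar -muY1 -[(muY Y)]mul1e -(integral_cst muY mY).
  { apply: ge0_le_integral => //.
  all: try (by move=> y _; rewrite /cst lee_fin).
  all: try exact: measurable_cst.
  all: by move=> y Yy; rewrite /cst lee_fin ler1n tau0. }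
have tblt : (tau_bar muY Y tau < +oo)%E.
  apply: le_lt_trans tauoo.
  rewrite /tau_bar.
  { apply: ge0_le_integral => //.
  all: try (by move=> y _; rewrite lee_fin ler0n).
  all: try (by apply: measurableT_comp).
  all: by move=> y _; rewrite gee0_abs // lee_fin ler0n. }
have E : (tau_bar muY Y tau *
    tower_pushforward muY Y f tau [set x | (t / n%:R < h x)%R] =
    \sum_(0 <= l <oo) muY (B l))%E.
  rewrite /tower_pushforward.
  move: tbge1 tblt; case: (tau_bar muY Y tau) => // r r1 _.
  rewrite /= muleCA -EFinM divff ?mule1 //.
  by rewrite gt_eqF // (lt_le_trans ltr01) // -lee_fin.
rewrite E; apply: le_trans H1 _.
exact: leeD2l.
Qed.
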